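(* Let $\mu \in \mathcal{X}$ and let $P_X$ be a probability distribution on $\mathcal{X}$. (i) If $D(\mu ; P_X) = 0$ then $D_L(\mu ; P_X) = 0$. (ii) If $D(\mu ; P_X) = 2$ then $D_L(\mu ; P_X) = 1$.
   Context: $(\mathcal{X}, d)$ is a complete separable metric space with its Borel $\sigma$-algebra. Define $h: \mathcal{X}^3 \to \mathbb{R}$ by $h(x_1, x_2, x_3) := \mathbb{I}( x_3 \notin \{x_1, x_2\} ) \dfrac{ d^2(x_1, x_3) + d^2(x_2, x_3) - d^2(x_1, x_2) }{d(x_1, x_3)\, d(x_2, x_3) }$, where $h := 0$ when $x_3 \in \{x_1,x_2\}$. The metric spatial depth of $\mu \in \mathcal{X}$ with respect to a probability distribution $P_X$ on $\mathcal{X}$ is $D(\mu; P_X) := 1 - \frac{1}{2} \mathrm{E} \{ h(X_1, X_2, \mu) \}$, where $X_1, X_2 \sim P_X$ are independent. The metric lens depth is $D_L(\mu ; P_X) := P[ d(X_1, X_2) \geq \max \{ d( X_1, \mu), d( X_2, \mu) \} ]$ with $X_1, X_2 \sim P_X$ independent. *)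

(* Defs.v *)
From HB Require Import structures.
From mathcomp Require Import all_boot all_order all_algebra.
From mathcomp Require Import all_classical all_reals all_analysis.
Set Implicit Arguments. Unset Strict Implicit. Unset Printing Implicit Defensive.
Import Order.TTheory GRing.Theory Num.Theory.
Local Open Scope classical_set_scope.
Local Open Scope ring_scope.

Definition is_metric (R : realType) (T : Type) (dist : T -> T -> R) : Prop :=
  [/\ forall x y, 0 <= dist x y,
      forall x y, dist x y = 0 <-> x = y,
      forall x y, dist x y = dist y x &
      forall x y z, dist x z <= dist x y + dist y z].

Definition dopen (R : realType) (T : Type) (dist : T -> T -> R) (A : set T) : Prop :=
  forall x, A x -> exists2 r : R, 0 < r & [set y | dist x y < r] `<=` A.

Definition dcomplete (R : realType) (T : Type) (dist : T -> T -> R) : Prop :=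
  forall u : nat -> T,
    (forall e : R, 0 < e -> exists N, forall m n, (N <= m)%N -> (N <= n)%N ->
        dist (u m) (u n) < e) ->
    exists l : T, forall e : R, 0 < e -> exists N, forall n, (N <= n)%N ->
        dist (u n) l < e.

Definition dseparable (R : realType) (T : Type) (dist : T -> T -> R) : Prop :=
  exists u : nat -> T, forall x (e : R), 0 < e -> exists n, dist x (u n) < e.

Definition borel_of (R : realType) (d : measure_display) (T : measurableType d)
  (dist : T -> T -> R) : Prop :=
  (@measurable d T) = <<s dopen dist >>.

Definition hker (R : realType) (T : eqType) (dist : T -> T -> R) (x1 x2 x3 : T) : R :=
  if (x3 != x1) && (x3 != x2) then
    (dist x1 x3 ^+ 2 + dist x2 x3 ^+ 2 - dist x1 x2 ^+ 2) / (dist x1 x3 * dist x2 x3)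
  else 0.

Definition spatial_depth (R : realType) (d : measure_display) (T : measurableType d)
  (dist : T -> T -> R) (P : probability T R) (mu : T) : \bar R :=
  (1%:E - 2^-1%:E * \int[(P \x P)%E]_z (hker dist z.1 z.2 mu)%:E)%E.

Definition lens_depth (R : realType) (d : measure_display) (T : measurableType d)
  (dist : T -> T -> R) (P : probability T R) (mu : T) : \bar R :=
  (P \x P)%E [set z | Num.max (dist z.1 mu) (dist z.2 mu) <= dist z.1 z.2].

(* Main.v *)
Require Import Defs.
From HB Require Import structures.
From mathcomp Require Import all_boot all_order all_algebra.
From mathcomp Require Import all_classical all_reals all_analysis.
From mathcomp Require Import lra measurable_realfun.
Import Order.TTheory GRing.Theory Num.Theory.
Local Open Scope classical_set_scope.
Local Open Scope ring_scope.

Lemma measurable_inv (R : realType) : measurable_fun setT (@GRing.inv R).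
Proof.
have -> : [set: R] = [set x | x != 0] `|` [set 0].
  by apply/seteqP; split => x //= _; case: (eqVneq x 0) => ?; [right|left].
have m1 : measurable [set x : R | x != 0].
  exact: measurable_realfun.open_measurable (@open_neq R 0).
apply/(measurable_funU _ m1 (measurable_set1 0)).
split; last exact: measurable_fun_set1.
apply: measurable_realfun.open_continuous_measurable_fun; first exact: open_neq.
by apply/in_setP => x /= x0; exact: inv_continuous.
Qed.

Section S.
Variables (R : realType) (d : measure_display) (T : measurableType d)
  (dist : T -> T -> R).
Hypotheses (Hm : is_metric dist) (Hsep : dseparable dist) (Hb : borel_of dist).

Let GE : (@measurable _ R) = <<s @measurable_realfun.RGenInftyO.G R >>.
Proof. exact: measurable_realfun.RGenInftyO.measurableE. Qed.

Lemma mdist_pt (a : T) : measurable_fun setT (fun x => dist x a).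
Proof.
case: Hm => d0 deq dsym dtri.
apply: (measurability _ GE) => _ [_ [r ->] <-].
rewrite setTI Hb; apply: sub_sigma_algebra => x /=; rewrite in_itv /= => hx.
exists (r - dist x a); first by rewrite subr_gt0.
move=> y /= hy; rewrite in_itv /=.
have H := dtri y x a; rewrite (dsym y x) in H; lra.
Qed.

Lemma mdist2 : measurable_fun setT (fun z : T * T => dist z.1 z.2).
Proof.
case: Hm => d0 deq dsym dtri.
case: Hsep => u hu.
apply: (measurability _ GE) => _ [_ [r ->] <-].
rewrite setTI.
have -> : (fun z : T * T => dist z.1 z.2) @^-1` `]-oo, r[ =
    \bigcup_n ((fun z : T * T => dist z.1 (u n) + dist z.2 (u n)) @^-1` `]-oo, r[).
  apply/seteqP; split => z /=; rewrite in_itv /=.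
    move=> hz.
    have [n hn] := hu z.1 ((r - dist z.1 z.2) / 2) ltac:(rewrite divr_gt0 // subr_gt0 //).
    exists n => //=; rewrite in_itv /=.
    have H := dtri z.2 z.1 (u n); rewrite (dsym z.2 z.1) in H; lra.
  move=> [n _] /=; rewrite in_itv /= => hn.
  have H := dtri z.1 (u n) z.2; rewrite (dsym (u n) z.2) in H; lra.
apply: bigcupT_measurable => n.
have mf : measurable_fun setT (fun z : T * T => dist z.1 (u n) + dist z.2 (u n)).
  apply: measurable_funD.
    exact: measurableT_comp (mdist_pt (u n)) measurable_fst.
  exact: measurableT_comp (mdist_pt (u n)) measurable_snd.
by have := mf measurableT _ (measurable_itv `]-oo, r[); rewrite setTI.
Qed.


Variable (mu : T).
Let a (z : T * T) := dist z.1 mu.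
Let b (z : T * T) := dist z.2 mu.
Let c (z : T * T) := dist z.1 z.2.
Let N z := a z ^+ 2 + b z ^+ 2 - c z ^+ 2.

Lemma hk_eq z : hker dist z.1 z.2 mu = N z / (a z * b z).
Proof.
case: Hm => d0 deq dsym dtri.
rewrite /hker; case: ifP => // /negbT; rewrite negb_and !negbK => /orP[]/eqP e.
  by rewrite /a -e (proj2 (deq mu mu) erefl) mul0r invr0 mulr0.
by rewrite /b -e (proj2 (deq mu mu) erefl) mulr0 invr0 mulr0.
Qed.

Lemma tri_facts z : (0 <= a z) * (0 <= b z) * (0 <= c z) * (c z <= a z + b z) *
  (a z <= c z + b z) * (b z <= c z + a z).
Proof.
case: Hm => d0 deq dsym dtri.
rewrite /a /b /c; do ! split.
- exact: d0.
- exact: d0.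
- exact: d0.
- by rewrite (dsym z.2 mu); exact: dtri.
- exact: dtri.
- by rewrite (dsym z.1 z.2); exact: dtri.
Qed.

Lemma hk_bound z : -2 <= hker dist z.1 z.2 mu <= 2.
Proof.
rewrite hk_eq; have [[[[[a0 b0] c0] h1] h2] h3] := tri_facts z.
have [p0|] := eqVneq (a z * b z) 0.
  by rewrite p0 invr0 mulr0; lra.
move=> pn0; have pp : 0 < a z * b z by rewrite lt_neqAle eq_sym pn0 mulr_ge0.
rewrite ler_pdivlMr // ler_pdivrMr //; rewrite /N; apply/andP; split; nra.
Qed.

Let E := [set z : T * T | Num.max (a z) (b z) <= c z].

Lemma hk_E1 z : hker dist z.1 z.2 mu + \1_E z <= 2.
Proof.
have /andP[_ hb] := hk_bound z.
rewrite /indic; case: (boolP (z \in E)) => [|_]; last by rewrite addr0.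
rewrite inE /E /= ge_max => /andP[ac bc].
rewrite hk_eq; have [[[[[a0 b0] c0] h1] h2] h3] := tri_facts z.
have [p0|] := eqVneq (a z * b z) 0.
  by rewrite p0 invr0 mulr0; lra.
move=> pn0; have pp : 0 < a z * b z by rewrite lt_neqAle eq_sym pn0 mulr_ge0.
suff : N z / (a z * b z) <= 1 by lra.
rewrite ler_pdivrMr // mul1r /N.
have [ab|ba] := lerP (a z) (b z); nra.
Qed.

Lemma hk_E2 z : \1_(~` E) z - 2 <= hker dist z.1 z.2 mu.
Proof.
have /andP[hb _] := hk_bound z.
rewrite /indic; case: (boolP (z \in ~` E)) => [|_]; last by rewrite (_ : false%:R = 0 :> R) //; lra.
rewrite inE /E /= => /negP; rewrite ge_max negb_and -!ltNge => /orP hE.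
rewrite hk_eq; have [[[[[a0 b0] c0] h1] h2] h3] := tri_facts z.
have [p0|] := eqVneq (a z * b z) 0.
  by rewrite p0 invr0 mulr0; lra.
move=> pn0; have pp : 0 < a z * b z by rewrite lt_neqAle eq_sym pn0 mulr_ge0.
suff : 0 <= N z / (a z * b z) by lra.
rewrite ler_pdivlMr // mul0r /N.
case: hE => h; nra.
Qed.


Lemma mhk : measurable_fun setT (fun z : T * T => hker dist z.1 z.2 mu).
Proof.
have ma : measurable_fun setT a := measurableT_comp (mdist_pt mu) measurable_fst.
have mb : measurable_fun setT b := measurableT_comp (mdist_pt mu) measurable_snd.
have mc : measurable_fun setT c := mdist2.
rewrite (_ : (fun z => _) = fun z => N z * (a z * b z)^-1); last first.
  by apply/funext => z; rewrite hk_eq.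
apply: measurable_funM.
  rewrite /N; apply: measurable_funB; first apply: measurable_funD.
  - exact: measurable_funX.
  - exact: measurable_funX.
  - exact: measurable_funX.
apply: measurableT_comp; first exact: measurable_inv.
exact: measurable_funM.
Qed.

Lemma mE : measurable E.
Proof.
have ma : measurable_fun setT a := measurableT_comp (mdist_pt mu) measurable_fst.
have mb : measurable_fun setT b := measurableT_comp (mdist_pt mu) measurable_snd.
have mc : measurable_fun setT c := mdist2.
have mg : measurable_fun setT (fun z => c z - Num.max (a z) (b z)).
  apply: measurable_funB => //; exact: measurable_maxr.
have -> : E = setT `&` (fun z => c z - Num.max (a z) (b z)) @^-1` `[0, +oo[.
  rewrite setTI /E /preimage; apply/seteqP; split => z /=; rewrite in_itv /= andbT subr_ge0 //.
exact: mg measurableT _ (measurable_itv _).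
Qed.

Variable P : probability T R.
Let m := (P \x P)%E.

Let mT : m setT = 1%E.
Proof.
rewrite /m -setXTT product_measure1E //.
by transitivity (1 * 1 : \bar R)%E; [congr (_ * _)%E; exact: probability_setT | exact: mule1].
Qed.

Let mfin : (m setT < +oo)%E.
Proof. by rewrite mT ltry. Qed.

Let int_hk : m.-integrable setT (EFin \o (fun z => hker dist z.1 z.2 mu)).
Proof.
apply: measurable_bounded_integrable => //; first exact: mhk.
exists 2; split; first exact: num_real.
move=> M hM z _ /=; have := hk_bound z; rewrite -ler_norml => h.
by apply: (le_trans h); exact: ltW.
Qed.

Let int_ind A : measurable A -> m.-integrable setT (EFin \o \1_A).
Proof.
move=> mA; apply: measurable_bounded_integrable => //.
exists 1; split; first exact: num_real.
move=> M hM z _ /=; apply: (le_trans _ (ltW hM)).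
by rewrite /indic; case: (_ \in _); rewrite ?normr1 ?normr0.
Qed.

Let int_cst (r : R) : m.-integrable setT (EFin \o (cst r)).
Proof.
apply: measurable_bounded_integrable => //; exact: bounded_cst.
Qed.

Let Ival (r : R) : spatial_depth dist P mu = r%:E ->
  (\int[m]_z (hker dist z.1 z.2 mu)%:E)%E = (2 - 2 * r)%:E.
Proof.
have fin := integrable_fin_num measurableT int_hk.
rewrite /spatial_depth -/m -(fineK fin) -EFinM -EFinB => /eqP; rewrite eqe => /eqP h.
congr EFin; lra.
Qed.

Lemma part1 : spatial_depth dist P mu = 0%E -> lens_depth dist P mu = 0%E.
Proof.
move=> /(Ival 0); rewrite mulr0 subr0 => hI.
have le : (\int[m]_z ((hker dist z.1 z.2 mu)%:E + (\1_E z)%:E) <=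
    \int[m]_z (cst 2%:E) z)%E.
  apply: le_integral => //.
  - exact: (integrableD measurableT int_hk (int_ind _ mE)).
  - exact: int_cst.
  by move=> z _; rewrite /= -EFinD lee_fin; exact: hk_E1.
move: le; rewrite (integralD_EFin measurableT int_hk (int_ind _ mE)) /= hI.
have eI : (\int[m]_z (\1_E z)%:E)%E = m E.
  have := integral_indic m measurableT mE; rewrite setIT; exact.
have eC : (\int[m]_z (cst 2%:E) z)%E = 2%:E.
  rewrite integral_cst //; transitivity (2%:E * 1 : \bar R)%E; last exact: mule1.
  congr (_ * _)%E; exact: mT.
rewrite eI eC.
have m0 : (0 <= m E)%E by exact: measure_ge0.
move=> h; apply/eqP; rewrite eq_le m0 andbT.
by rewrite -(leeD2lE (x := 2%:E)) // adde0.
Qed.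

Lemma part2 : spatial_depth dist P mu = 2%:E -> lens_depth dist P mu = 1%E.
Proof.
move=> /(Ival 2) hI.
have mCE : measurable (~` E) by exact: measurableC mE.
have le : (\int[m]_z ((\1_(~` E) z)%:E + (cst (-2) z)%:E) <=
    \int[m]_z (hker dist z.1 z.2 mu)%:E)%E.
  apply: le_integral => //.
  - exact: (integrableD measurableT (int_ind _ mCE) (int_cst _)).
  by move=> z _; rewrite /= -EFinD lee_fin; exact: hk_E2.
move: le; rewrite (integralD_EFin measurableT (int_ind _ mCE) (int_cst _)) /= hI.
have eI : (\int[m]_z (\1_(~` E) z)%:E)%E = m (~` E).
  have := integral_indic m measurableT mCE; rewrite setIT; exact.
have eC : (\int[m]_z (cst (-2)%:E) z)%E = (-2)%:E.
  rewrite integral_cst //; transitivity ((-2)%:E * 1 : \bar R)%E; last exact: mule1.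
  congr (_ * _)%E; exact: mT.
rewrite eI eC.
have m0 : (0 <= m (~` E))%E by exact: measure_ge0.
rewrite (_ : (2 - 2 * 2)%:E = 0 + (-2)%:E)%E; last by rewrite add0e; congr EFin; lra.
rewrite leeD2rE // => h.
have mC0 : m (~` E) = 0%E by apply/eqP; rewrite eq_le m0 andbT.
have hU := measureU m mE mCE (setICr E).
rewrite setUv in hU.
change (m E = 1%E); transitivity (m E + m (~` E))%E; first by rewrite mC0 adde0.
transitivity (m setT); [exact: (esym hU) | exact: mT].
Qed.

End S.

Theorem corollary1 (R : realType) (d : measure_display) (T : measurableType d)
  (dist : T -> T -> R)
  (Hmetric : is_metric dist) (Hcomplete : dcomplete dist)
  (Hsep : dseparable dist) (Hborel : borel_of dist)
  (P : probability T R) (mu : T) :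
  (spatial_depth dist P mu = 0%E -> lens_depth dist P mu = 0%E) /\
  (spatial_depth dist P mu = 2%:E -> lens_depth dist P mu = 1%E).
Proof.
split; [exact: (@part1 R d T dist Hmetric Hsep Hborel mu P) | exact: (@part2 R d T dist Hmetric Hsep Hborel mu P)].
Qed.
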